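(* Let $N\ge3$ and $\widetilde\psi\in\mathbb{Q}\langle\langle\widetilde X\rangle\rangle$. Then $\mathcal F\circ\tilde d_{\widetilde\psi}=d_{\mathcal F(\widetilde\psi)}\circ\mathcal F$ as maps $\mathbb{Q}(\mu_N)\langle\langle\widetilde X\rangle\rangle\to\mathbb{Q}(\mu_N)\langle\langle X\rangle\rangle$ (where $\tilde d_{\widetilde\psi}$ and $d_{\mathcal F(\widetilde\psi)}$ are extended $\mathbb{Q}(\mu_N)$-linearly).
   Context: $\zeta_N=\exp(2\pi i/N)$, $\mu_N$ the complex $N$-th roots of unity, $\iota:\{1,\dots,N\}\to\mathbb{Z}/N\mathbb{Z}$ the residue-class bijection. $K\langle\langle\mathcal L\rangle\rangle$: noncommutative formal power series over $\mathcal L$. Alphabets $X=\{x_0\}\cup\{x_\zeta:\zeta\in\mu_N\}$, $\widetilde X=\{\tilde x\}\cup\{\tilde x_\alpha:\alpha\in\mathbb{Z}/N\mathbb{Z}\}$. $\mathcal F$ is the continuous $\mathbb{Q}(\mu_N)$-algebra isomorphism $\tilde x\mapsto x_0$, $\tilde x_\alpha\mapsto\sum_{m=1}^N\zeta_N^{-m\iota^{-1}(\alpha)}x_{\zeta_N^m}$. For $\zeta\in\mu_N$, $t_\zeta$ is the algebra automorphism $x_0\mapsto x_0$, $x_\eta\mapsto x_{\zeta\eta}$; for $\psi\in\mathbb{Q}(\mu_N)\langle\langle X\rangle\rangle$, $d_\psi$ is the continuous derivation with $x_0\mapsto0$, $x_\zeta\mapsto[x_\zeta,t_\zeta(\psi)]$.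 For $a\in\{1,\dots,N\}$, $\tilde t_a$ is the algebra automorphism $\tilde x\mapsto\tilde x$, $\tilde x_\alpha\mapsto\zeta_N^{a\iota^{-1}(\alpha)}\tilde x_\alpha$, and $\widetilde T_a=\frac1N\sum_{m=1}^N\zeta_N^{-ma}\tilde t_m$. For $\widetilde\psi\in\mathbb{Q}\langle\langle\widetilde X\rangle\rangle$, $\tilde d_{\widetilde\psi}$ is the continuous derivation with $\tilde x\mapsto0$, $\tilde x_\alpha\mapsto\widetilde T_{\iota^{-1}(\alpha)}\big([\sum_{\beta\in\mathbb{Z}/N\mathbb{Z}}\tilde x_\beta,\widetilde\psi]\big)$. *)

(* Defs.v *)
(* Coefficients: algC (algebraic complex numbers), which
   contains Q(mu_N); Q and Q(mu_N) are carved out by predicates. *)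
From HB Require Import structures.
From mathcomp Require Import all_boot all_order all_algebra all_field.
Set Implicit Arguments. Unset Strict Implicit. Unset Printing Implicit Defensive.
Import Order.TTheory GRing.Theory Num.Theory.
Local Open Scope ring_scope.

(* zeta_N = exp(2 pi i / N): N.-root (-1) is the N-th root of -1 of minimal
   argument, i.e. exp(i pi / N); its square is exp(2 pi i / N). *)
Definition zetaN (N : nat) : algC := (N.-root (-1)) ^+ 2.

Definition inQmuN (N : nat) (x : algC) : Prop :=
  exists p : {poly rat}, x = (map_poly ratr p).[zetaN N].

(* Noncommutative formal power series over the finite alphabet L with
   coefficients in algC: functions from words to coefficients. *)
Definition ser (L : finType) := seq L -> algC.

Section Series.
Variable L : finType.

Definition sadd (f g : ser L) : ser L := fun w => f w + g w.
Definition sopp (f : ser L) : ser L := fun w => - f w.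
Definition sscale (c : algC) (f : ser L) : ser L := fun w => c * f w.
Definition szero : ser L := fun _ => 0.
Definition sone : ser L := fun w => (w == [::])%:R.
Definition sletter (a : L) : ser L := fun w => (w == [:: a])%:R.
Definition smul (f g : ser L) : ser L :=
  fun w => \sum_(i < (size w).+1) f (take i w) * g (drop i w).
Definition scomm (f g : ser L) : ser L := sadd (smul f g) (sopp (smul g f)).
Definition sprod (fs : seq (ser L)) : ser L := foldr smul sone fs.
Definition ssum (I : finType) (F : I -> ser L) : ser L :=
  fun w => \sum_(i : I) F i w.

End Series.

(* The continuous derivation D with prescribed values on letters:
   D(a_1...a_k) = sum_i a_1..a_{i-1} D(a_i) a_{i+1}..a_k, extended by
   continuity/linearity.  A word of length k only contributes to
   coefficients of words of length >= k-1, hence the finite sum below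
   (over words of length <= |v|+1) is the coefficient at v of the
   convergent infinite sum. *)
Definition sderiv (L : finType) (D : L -> ser L) (f : ser L) : ser L :=
  fun v => \sum_(k < (size v).+2) \sum_(t : k.-tuple L)
     f t * \sum_(i < k)
        sprod (map (@sletter L) (take i t) ++ D (tnth t i)
                 :: map (@sletter L) (drop i.+1 t)) v.

(* continuous algebra morphism ser L1 -> ser L2 given by phi on letters,
   where every phi a has zero constant term (so a word of length k only
   contributes to coefficients of words of length >= k). *)
Definition ssubst (L1 L2 : finType) (phi : L1 -> ser L2) (f : ser L1) : ser L2 :=
  fun v => \sum_(k < (size v).+1) \sum_(t : k.-tuple L1)
     f t * sprod (map phi t) v.

(* X = {x_0} u {x_zeta : zeta in mu_N}: letter [None] is x_0 and
   [Some k] (k : 'I_N) is x_{zeta_N^k}.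
   Xt = {xt} u {xt_alpha : alpha in Z/NZ}: [None] is xt and [Some alpha]
   is xt_alpha, the residue class alpha being represented by 0 <= alpha < N. *)
Definition alphX (N : nat) := option 'I_N.
Definition alphXt (N : nat) := option 'I_N.

Definition xz (N : nat) (m : nat) : alphX N := insub (m %% N)%N.

Definition iota_inv (N : nat) (alpha : 'I_N) : nat :=
  if val alpha == 0%N then N else val alpha.

Definition calF_letter (N : nat) (b : alphXt N) : ser (alphX N) :=
  match b with
  | None => sletter (None : alphX N)
  | Some alpha => fun w => \sum_(1 <= m < N.+1)
        (zetaN N) ^- (m * iota_inv alpha)%N * sletter (xz N m) w
  end.
Definition calF (N : nat) : ser (alphXt N) -> ser (alphX N) :=
  ssubst (@calF_letter N).

Definition t_zeta (N : nat) (k : 'I_N) : ser (alphX N) -> ser (alphX N) :=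
  ssubst (fun a : alphX N => match a with
                  | None => sletter (None : alphX N)
                  | Some j => sletter (xz N (val k + val j)%N)
                  end).

Definition d_psi (N : nat) (psi : ser (alphX N)) : ser (alphX N) -> ser (alphX N) :=
  sderiv (fun a : alphX N => match a with
                  | None => @szero (alphX N)
                  | Some k => scomm (sletter (Some k)) (t_zeta k psi)
                  end).

Definition tt_a (N : nat) (a : nat) : ser (alphXt N) -> ser (alphXt N) :=
  ssubst (fun b : alphXt N => match b with
                  | None => sletter (None : alphXt N)
                  | Some alpha =>
                      sscale ((zetaN N) ^+ (a * iota_inv alpha)%N) (sletter (Some alpha))
                  end).

Definition Tt_a (N : nat) (a : nat) (f : ser (alphXt N)) : ser (alphXt N) :=
  fun w => N%:R^-1 * \sum_(1 <= m < N.+1) (zetaN N) ^- (m * a)%N * tt_a m f w.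

Definition dt_psi (N : nat) (psi : ser (alphXt N)) : ser (alphXt N) -> ser (alphXt N) :=
  sderiv (fun b : alphXt N => match b with
                  | None => @szero (alphXt N)
                  | Some alpha =>
                      Tt_a (iota_inv alpha)
                        (scomm (ssum (fun beta : 'I_N => sletter (Some beta : alphXt N))) psi)
                  end).

(* Main.v *)
Require Import Defs.
From mathcomp Require Import all_boot all_order all_algebra all_field.
From mathcomp Require Import ring zify.
From Stdlib Require Import FunctionalExtensionality.
Set Implicit Arguments. Unset Strict Implicit. Unset Printing Implicit Defensive.
Import Order.TTheory GRing.Theory Num.Theory.
Local Open Scope ring_scope.

Definition wsum (L : finType) n (F : seq L -> algC) : algC :=
  \sum_(k < n.+1) \sum_(t : k.-tuple L) F t.

Lemma sum_ord_bound n m (G : nat -> algC) : (m <= n)%N ->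
  (forall k, (m < k)%N -> G k = 0) -> \sum_(k < n.+1) G k = \sum_(k < m.+1) G k.
Proof.
move=> hmn hG; rewrite [RHS](big_ord_widen n.+1 G) ?ltnS //.
rewrite (bigID (fun k : 'I_n.+1 => (k < m.+1)%N)) /= [X in _ + X]big1 ?addr0 // => k hk.
by apply: hG; rewrite ltnNge -ltnS.
Qed.

Section WS.
Variable L : finType.
Implicit Types (F G : seq L -> algC).

Lemma eq_wsum n F G : (forall w, F w = G w) -> wsum n F = wsum n G.
Proof. by move=> h; apply: eq_bigr => k _; apply: eq_bigr => t _; apply: h. Qed.

Lemma wsum_ext n F G : (forall w, (size w <= n)%N -> F w = G w) -> wsum n F = wsum n G.
Proof.
move=> h; apply: eq_bigr => k _; apply: eq_bigr => t _; apply: h.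
by rewrite size_tuple -ltnS.
Qed.

Lemma wsum_sum (I : Type) (r : seq I) (P : pred I) n (F : I -> seq L -> algC) :
  \sum_(i <- r | P i) wsum n (F i) = wsum n (fun w => \sum_(i <- r | P i) F i w).
Proof. rewrite /wsum exchange_big; apply: eq_bigr => k _; exact: exchange_big. Qed.

Lemma wsumMl n c F : c * wsum n F = wsum n (fun w => c * F w).
Proof. rewrite /wsum mulr_sumr; apply: eq_bigr => k _; by rewrite mulr_sumr. Qed.
Lemma wsumMr n c F : wsum n F * c = wsum n (fun w => F w * c).
Proof. rewrite /wsum mulr_suml; apply: eq_bigr => k _; by rewrite mulr_suml. Qed.
Lemma wsumD n F G : wsum n F + wsum n G = wsum n (fun w => F w + G w).
Proof. rewrite /wsum -big_split; apply: eq_bigr => k _; by rewrite -big_split. Qed.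
Lemma wsumN n F : - wsum n F = wsum n (fun w => - F w).
Proof. rewrite /wsum -sumrN; apply: eq_bigr => k _; by rewrite -sumrN. Qed.
Lemma wsum0 n : wsum n (fun _ : seq L => 0) = 0.
Proof. by rewrite /wsum big1 // => k _; rewrite big1. Qed.

Lemma tsum_delta k w F :
  \sum_(t : k.-tuple L) F t * (tval t == w)%:R = if size w == k then F w else 0.
Proof.
case: eqP => hw.
  subst k; rewrite (bigD1 (in_tuple w)) //= eqxx mulr1 big1 ?addr0 // => t ht.
  case: eqP => [h|]; last by rewrite mulr0.
  by case/eqP: ht; apply: val_inj.
rewrite big1 // => t _; case: eqP => [h|]; last by rewrite mulr0.
by case: hw; rewrite -h size_tuple.
Qed.

Lemma wsum_delta n w F :
  wsum n (fun t => F t * (t == w)%:R) = if (size w <= n)%N then F w else 0.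
Proof.
rewrite /wsum (eq_bigr (fun k : 'I_n.+1 => if size w == k then F w else 0));
  last by move=> k _; exact: tsum_delta.
case: ifP => hw.
  have hw' : (size w < n.+1)%N by rewrite ltnS.
  rewrite (bigD1 (Ordinal hw')) /= ?eqxx // big1 ?addr0 // => k hk.
  case: eqP => // h; case/eqP: hk; exact: val_inj.
rewrite big1 // => k _; case: eqP => // h.
by move: (ltn_ord k); rewrite -h ltnS hw.
Qed.

Lemma wsum_bound n m F : (m <= n)%N -> (forall w, (m < size w)%N -> F w = 0) ->
  wsum n F = wsum m F.
Proof.
move=> hmn hF; rewrite /wsum (@sum_ord_bound n m (fun k => \sum_(t : k.-tuple L) F t)) //.
move=> k hk; rewrite big1 // => t _; apply: hF; by rewrite size_tuple.
Qed.

End WS.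

Lemma wsum_exch (L1 L2 : finType) n m (F : seq L1 -> seq L2 -> algC) :
  wsum n (fun t => wsum m (F t)) = wsum m (fun u => wsum n (fun t => F t u)).
Proof.
transitivity (\sum_(k < n.+1) wsum m (fun u => \sum_(t : k.-tuple L1) F t u)).
  by apply: eq_bigr => k _; rewrite wsum_sum.
by rewrite wsum_sum.
Qed.


Lemma eqn_minl a b : (minn a b == a) = (a <= b)%N.
Proof. by apply/idP/idP => [/eqP <-|/minn_idPl ->]; rewrite ?geq_minr. Qed.

Section Ser.
Variable L : finType.
Implicit Types (f g h : ser L) (t s u v w : seq L) (a b : L).

Lemma sext f g : (forall w, f w = g w) -> f = g.
Proof. exact: functional_extensionality. Qed.

Definition word t : ser L := sprod (map (@sletter L) t).
Definition low n f := forall w, (size w < n)%N -> f w = 0.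

Lemma smul_delta_l t g w :
  smul (fun x => (x == t)%:R) g w = (take (size t) w == t)%:R * g (drop (size t) w).
Proof.
rewrite /smul; case: (leqP (size t) (size w)) => ht.
  have ht' : (size t < (size w).+1)%N by rewrite ltnS.
  rewrite (bigD1 (Ordinal ht')) //= big1 ?addr0 // => i hi.
  case: eqP => [h|]; last by rewrite mul0r.
  case/eqP: hi; apply: val_inj => /=; rewrite -h size_takel //; by rewrite -ltnS.
rewrite big1; last first.
  move=> i _; case: eqP => [h|]; last by rewrite mul0r.
  have := congr1 size h; rewrite size_take_min => e.
  by move: ht; rewrite -e ltnNge geq_minr.
case: eqP => [h|]; last by rewrite mul0r.
have := congr1 size h; rewrite size_take_min => e.
by move: ht; rewrite -e ltnNge geq_minr.
Qed.

Lemma word_coef t : word t = fun w => (w == t)%:R.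
Proof.
elim: t => [//|a t IH]; apply: sext => w.
rewrite /word /= -/(word t) IH.
change (sletter a) with (fun x : seq L => ((x == [:: a])%:R : algC)).
rewrite smul_delta_l /=.
case: w => [|b w] /=; first by rewrite mul0r.
rewrite take0 drop0 !eqseq_cons andbT.
by case: (b == a); rewrite ?mul1r ?mul0r.
Qed.

Lemma smul_word_l t g w :
  smul (word t) g w = (take (size t) w == t)%:R * g (drop (size t) w).
Proof. by rewrite word_coef smul_delta_l. Qed.

Lemma smul_word t s : smul (word t) (word s) = word (t ++ s).
Proof.
apply: sext => w; rewrite smul_word_l !word_coef.
have [->|hw] := eqVneq w (t ++ s).
  by rewrite take_size_cat // drop_size_cat // !eqxx mulr1.
case: eqP => [h1|]; last by rewrite mul0r.
case: eqP => [h2|]; last by rewrite mulr0.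
by case/eqP: hw; rewrite -(cat_take_drop (size t) w) h1 h2.
Qed.

Lemma low_le n m f : (m <= n)%N -> low n f -> low m f.
Proof. move=> hmn hf w hw; apply: hf; exact: leq_trans hw hmn. Qed.

Lemma low_mul n m f g : low n f -> low m g -> low (n + m) (smul f g).
Proof.
move=> hf hg w hw; rewrite /smul big1 // => i _.
have ar : forall i n m sw : nat, (sw < n + m)%N -> ~~ (minn i sw < n)%N -> (sw - i < m)%N.
  by move=> *; lia.
case: (ltnP (minn i (size w)) n) => hi.
  by rewrite hf ?mul0r // size_take_min.
by rewrite hg ?mulr0 // size_drop; apply: (ar _ n) => //; rewrite -leqNgt.
Qed.

Lemma low_letter a : low 1 (sletter a).
Proof. by case. Qed.

Lemma low_szero n : low n (@szero L).
Proof. by []. Qed.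

Lemma smul1r f : smul f (@sone L) = f.
Proof.
apply: sext => w; rewrite /smul big_ord_recr /= take_size drop_size /sone eqxx mulr1.
rewrite big1 ?add0r // => i _; rewrite /sone.
case: eqP => [h|]; last by rewrite mulr0.
have := congr1 size h; rewrite size_drop /=; have := ltn_ord i; lia.
Qed.

Lemma smulr0 f : smul f (@szero L) = @szero L.
Proof. by apply: sext => w; rewrite /smul big1 // => i _; rewrite mulr0. Qed.

Lemma smul0r f : smul (@szero L) f = @szero L.
Proof. by apply: sext => w; rewrite /smul big1 // => i _; rewrite mul0r. Qed.

Lemma wsum_deltaV n w (F : seq L -> algC) : ((n < size w)%N -> F w = 0) ->
  wsum n (fun t => F t * (t == w)%:R) = F w.
Proof.
move=> h; rewrite wsum_delta; case: ifP => // /negbT; rewrite -ltnNge => h'.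
by rewrite h.
Qed.

Lemma smul_expand n f g u : (size u <= n)%N ->
  smul f g u = wsum n (fun t => wsum n (fun s => f t * g s * (u == t ++ s)%:R)).
Proof.
move=> hu.
have e t : wsum n (fun s => f t * g s * (u == t ++ s)%:R) =
   (f t * g (drop (size t) u)) * (take (size t) u == t)%:R.
  transitivity (wsum n (fun s => (f t * (take (size t) u == t)%:R * g s) *
                                 (s == drop (size t) u)%:R)).
    apply: eq_wsum => s.
    have -> : (u == t ++ s) = (take (size t) u == t) && (s == drop (size t) u).
      apply/eqP/andP => [->|[/eqP h1 /eqP h2]].
        by rewrite take_size_cat // drop_size_cat.
      by rewrite -(cat_take_drop (size t) u) h1 h2.
    by case: eqP; case: eqP; rewrite ?mulr1 ?mulr0 ?mul0r.
  rewrite wsum_delta size_drop (leq_trans (leq_subr _ _) hu).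
  by rewrite mulrAC.
rewrite (eq_wsum _ e) /wsum /smul.
rewrite [RHS](eq_bigr (fun k : 'I_n.+1 =>
   if (k <= size u)%N then f (take k u) * g (drop k u) else 0)); last first.
  move=> k _.
  rewrite (eq_bigr (fun t : k.-tuple L => (f t * g (drop k u)) * (tval t == take k u)%:R)).
    by rewrite (@tsum_delta L k (take k u) (fun x => f x * g (drop k u))) size_take_min eqn_minl.
  by move=> t _; rewrite size_tuple eq_sym.
rewrite (@sum_ord_bound n (size u) (fun k => if (k <= size u)%N then f (take k u) * g (drop k u) else 0)) //.
  by apply: eq_bigr => k _; rewrite -ltnS ltn_ord.
by move=> k hk; rewrite leqNgt hk.
Qed.

End Ser.


Section Ser2.
Variable L : finType.
Implicit Types (f g h : ser L) (t s u v w : seq L) (a b : L).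

Lemma wsum_collapse n v w r (C : algC) : (size v <= n)%N ->
  wsum n (fun t' => C * (v == t' ++ r)%:R * (t' == w)%:R) = C * (v == w ++ r)%:R.
Proof.
move=> hv; rewrite wsum_deltaV // => hw.
case: eqP => [e|]; last by rewrite mulr0.
by move: hv; rewrite e size_cat; lia.
Qed.

Lemma wsum_collapse_r n v w t (C : algC) : (size v <= n)%N ->
  wsum n (fun x => C * (v == t ++ x)%:R * (x == w)%:R) = C * (v == t ++ w)%:R.
Proof.
move=> hv; rewrite wsum_deltaV // => hw.
case: eqP => [e|]; last by rewrite mulr0.
by move: hv; rewrite e size_cat; lia.
Qed.

Lemma smulA f g h : smul (smul f g) h = smul f (smul g h).
Proof.
apply: sext => v; set n := size v.
have hv : (size v <= n)%N by [].
have E1 : smul (smul f g) h v = wsum n (fun r => wsum n (fun t => wsum n (fun s =>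
     f t * g s * h r * (v == (t ++ s) ++ r)%:R))).
  rewrite (smul_expand _ _ hv).
  rewrite (wsum_ext (G := fun t' => wsum n (fun r => wsum n (fun t => wsum n (fun s =>
      f t * g s * h r * (v == t' ++ r)%:R * (t' == t ++ s)%:R))))); last first.
    move=> t' ht'; apply: eq_wsum => r; rewrite (smul_expand _ _ ht') !wsumMr.
    apply: eq_wsum => t; rewrite !wsumMr; apply: eq_wsum => s; ring.
  rewrite wsum_exch.
  under eq_wsum => r do rewrite wsum_exch.
  under eq_wsum => r do under eq_wsum => t do rewrite wsum_exch.
  by under eq_wsum => r do under eq_wsum => t do under eq_wsum => s do rewrite wsum_collapse //.
have E2 : smul f (smul g h) v = wsum n (fun t => wsum n (fun s => wsum n (fun r =>
     f t * g s * h r * (v == t ++ (s ++ r))%:R))).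
  rewrite (smul_expand _ _ hv).
  rewrite (wsum_ext (G := fun t => wsum n (fun s' => wsum n (fun s => wsum n (fun r =>
      f t * g s * h r * (v == t ++ s')%:R * (s' == s ++ r)%:R))))); last first.
    move=> t _; apply: eq_wsum => s'.
    case: (leqP (size s') n) => hs'.
      rewrite (smul_expand _ _ hs') !wsumMl !wsumMr.
      apply: eq_wsum => s; rewrite !wsumMl !wsumMr; apply: eq_wsum => r; ring.
    have -> : (v == t ++ s') = false.
      by apply/eqP => e; move: hs'; rewrite /n e size_cat; lia.
    rewrite mulr0; symmetry; rewrite -(wsum0 L n); apply: eq_wsum => s.
    rewrite -(wsum0 L n); apply: eq_wsum => r; by rewrite mulr0 mul0r.
  under eq_wsum => t do rewrite wsum_exch.
  under eq_wsum => t do under eq_wsum => s do rewrite wsum_exch.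
  by under eq_wsum => t do under eq_wsum => s do under eq_wsum => r do rewrite wsum_collapse_r //.
rewrite E1 E2 wsum_exch; under eq_wsum => t do rewrite wsum_exch.
by apply: eq_wsum => t; apply: eq_wsum => s; apply: eq_wsum => r; rewrite catA.
Qed.

End Ser2.

Section Ser3.
Variable L : finType.
Implicit Types (f g h : ser L) (t s u v w : seq L) (a b : L).

Lemma smul1l f : smul (@sone L) f = f.
Proof.
apply: sext => w; change (@sone L) with (fun x : seq L => ((x == [::])%:R : algC)).
by rewrite smul_delta_l /= take0 drop0 eqxx mul1r.
Qed.

Lemma smulDl f g h : smul (sadd f g) h = sadd (smul f h) (smul g h).
Proof. by apply: sext => w; rewrite /smul /sadd -big_split; apply: eq_bigr => i _; rewrite mulrDl. Qed.

Lemma smulDr f g h : smul f (sadd g h) = sadd (smul f g) (smul f h).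
Proof. by apply: sext => w; rewrite /smul /sadd -big_split; apply: eq_bigr => i _; rewrite mulrDr. Qed.

Lemma smul_sumr (I : Type) (r : seq I) (P : pred I) f (F : I -> ser L) w :
  smul f (fun x => \sum_(i <- r | P i) F i x) w = \sum_(i <- r | P i) smul f (F i) w.
Proof.
rewrite /smul exchange_big; apply: eq_bigr => j _; by rewrite mulr_sumr.
Qed.

Lemma low_add n f g : low n f -> low n g -> low n (sadd f g).
Proof. by move=> hf hg w hw; rewrite /sadd hf ?hg ?addr0. Qed.

Lemma low_word t : low (size t) (word t).
Proof. by move=> w hw; rewrite word_coef; case: eqP => // e; move: hw; rewrite e ltnn. Qed.

End Ser3.

Section Op.
Variables L1 L2 : finType.

Definition op (K : seq L1 -> ser L2) (B : seq L2 -> nat) (f : ser L1) : ser L2 :=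
  fun v => wsum (B v) (fun t => f t * K t v).
Definition vanish (K : seq L1 -> ser L2) (B : seq L2 -> nat) :=
  forall t v, (B v < size t)%N -> K t v = 0.

Variables (K : seq L1 -> ser L2) (B : seq L2 -> nat).

Lemma op_expand f v n : vanish K B -> (B v <= n)%N ->
  op K B f v = wsum n (fun t => f t * K t v).
Proof.
by move=> hK hn; rewrite /op (wsum_bound hn) // => t ht; rewrite hK ?mulr0.
Qed.

Lemma op_delta t : vanish K B -> op K B (fun w => (w == t)%:R) = K t.
Proof.
move=> hK; apply: sext => v; rewrite /op.
under eq_wsum => u do rewrite mulrC.
by rewrite wsum_deltaV // => h; rewrite hK.
Qed.

Lemma op_word t : vanish K B -> op K B (word t) = K t.
Proof. by move=> hK; rewrite word_coef op_delta. Qed.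

Lemma op_add f g : op K B (sadd f g) = sadd (op K B f) (op K B g).
Proof. by apply: sext => v; rewrite /op /sadd wsumD; apply: eq_wsum => t; rewrite mulrDl. Qed.

Lemma op_opp f : op K B (sopp f) = sopp (op K B f).
Proof. by apply: sext => v; rewrite /op /sopp wsumN; apply: eq_wsum => t; rewrite mulNr. Qed.

Lemma op_scale c f : op K B (sscale c f) = sscale c (op K B f).
Proof. by apply: sext => v; rewrite /op /sscale wsumMl; apply: eq_wsum => t; rewrite mulrA. Qed.

Lemma op_zero : op K B (@szero L1) = @szero L2.
Proof. by apply: sext => v; apply: big1 => k _; apply: big1 => t _; rewrite mul0r. Qed.

Lemma op_sum (I : Type) (r : seq I) (P : pred I) (F : I -> ser L1) :
  op K B (fun w => \sum_(i <- r | P i) F i w) = fun v => \sum_(i <- r | P i) op K B (F i) v.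
Proof. by apply: sext => v; rewrite /op wsum_sum; apply: eq_wsum => t; rewrite mulr_suml. Qed.

End Op.

Definition Phi (L1 L2 : finType) (phi : L1 -> ser L2) (t : seq L1) : ser L2 :=
  sprod (map phi t).

Lemma ssubst_op (L1 L2 : finType) (phi : L1 -> ser L2) :
  ssubst phi = op (Phi phi) (fun v => size v).
Proof. by []. Qed.

Lemma low_Phi (L1 L2 : finType) (phi : L1 -> ser L2) :
  (forall a, low 1 (phi a)) -> forall t, low (size t) (Phi phi t).
Proof.
move=> hphi; elim=> [|a t IH] /=; first by move=> w.
exact: (low_mul (hphi a) IH).
Qed.

Lemma vanish_Phi (L1 L2 : finType) (phi : L1 -> ser L2) :
  (forall a, low 1 (phi a)) -> vanish (Phi phi) (fun v => size v).
Proof. by move=> hphi t v h; apply: low_Phi. Qed.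

Lemma Phi_cat (L1 L2 : finType) (phi : L1 -> ser L2) t s :
  Phi phi (t ++ s) = smul (Phi phi t) (Phi phi s).
Proof.
elim: t => [|a t IH] /=; first by rewrite smul1l.
by rewrite /Phi /= -/(Phi phi (t ++ s)) -/(Phi phi t) IH smulA.
Qed.

Lemma ssubst_mul (L1 L2 : finType) (phi : L1 -> ser L2) (hphi : forall a, low 1 (phi a))
  (f g : ser L1) : ssubst phi (smul f g) = smul (ssubst phi f) (ssubst phi g).
Proof.
have hV := vanish_Phi hphi.
apply: sext => v; set n := size v.
have hv : (size v <= n)%N by [].
have E1 : ssubst phi (smul f g) v =
    wsum n (fun t => wsum n (fun s => f t * g s * Phi phi (t ++ s) v)).
  rewrite ssubst_op /op -/n.
  rewrite (wsum_ext (G := fun u => wsum n (fun t => wsum n (fun s =>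
      f t * g s * Phi phi u v * (u == t ++ s)%:R)))); last first.
    move=> u hu; rewrite (smul_expand _ _ hu) wsumMr; apply: eq_wsum => t.
    rewrite wsumMr; apply: eq_wsum => s; ring.
  rewrite wsum_exch; under eq_wsum => t do rewrite wsum_exch.
  apply: eq_wsum => t; apply: eq_wsum => s; rewrite wsum_deltaV // => h.
  by rewrite (low_Phi hphi) ?mulr0.
have E2 : smul (ssubst phi f) (ssubst phi g) v =
    wsum n (fun t => wsum n (fun s => f t * g s * Phi phi (t ++ s) v)).
  rewrite (smul_expand _ _ hv).
  rewrite (wsum_ext (G := fun u => wsum n (fun u' => wsum n (fun t => wsum n (fun s =>
      f t * g s * (Phi phi t u * Phi phi s u' * (v == u ++ u')%:R)))))); last first.
    move=> u hu; apply: wsum_ext => u' hu'.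
    rewrite !ssubst_op (op_expand _ hV hu) (op_expand _ hV hu') !wsumMr.
    apply: eq_wsum => t; rewrite !wsumMl !wsumMr; apply: eq_wsum => s; ring.
  under eq_wsum => u do rewrite wsum_exch.
  under eq_wsum => u do under eq_wsum => t do rewrite wsum_exch.
  rewrite wsum_exch.
  under eq_wsum => t do rewrite wsum_exch.
  apply: eq_wsum => t; apply: eq_wsum => s.
  under eq_wsum => u do rewrite -wsumMl.
  by rewrite -wsumMl -(smul_expand _ _ hv) Phi_cat.
by rewrite E1 E2.
Qed.


Section Der.
Variable L : finType.
Implicit Types (f g h : ser L) (t s u v w : seq L) (a b : L).

Fixpoint Der (D : L -> ser L) (t : seq L) : ser L :=
  if t is a :: t' then sadd (smul (D a) (word t')) (smul (sletter a) (Der D t'))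
  else @szero L.

Lemma low0 f : low 0 f. Proof. by []. Qed.

Lemma low_Der D t : low (size t).-1 (Der D t).
Proof.
elim: t => [|a t IH] /=; first by [].
apply: low_add; first by have := low_mul (low0 (D a)) (@low_word L t); rewrite add0n.
apply: (low_le (leqSpred (size t))); have := low_mul (low_letter a) IH; by rewrite add1n.
Qed.

Lemma vanish_Der D : vanish (Der D) (fun v => (size v).+1).
Proof. by move=> t v h; apply: low_Der; rewrite -ltnS (ltn_predK h). Qed.

Lemma sprod_cons (x : ser L) l : sprod (x :: l) = smul x (sprod l).
Proof. by []. Qed.

Lemma Der_sum (x0 : L) D w :
  (fun v => \sum_(i < size w) sprod (map (@sletter L) (take i w) ++
        D (nth x0 w i) :: map (@sletter L) (drop i.+1 w)) v) = Der D w.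
Proof.
elim: w => [|a w IH]; apply: functional_extensionality => v; first by rewrite big_ord0.
rewrite big_ord_recl [take 0 _]/= [drop 1 _]/= drop0 [nth _ _ 0]/= cat0s sprod_cons.
under eq_bigr => i _ do rewrite [take _ _]/= [drop _ _]/= [nth _ _ _]/= map_cons cat_cons sprod_cons.
by rewrite -smul_sumr IH.
Qed.

Lemma sderivE (x0 : L) D : sderiv D = op (Der D) (fun v => (size v).+1).
Proof.
apply: functional_extensionality => f; apply: sext => v; rewrite /sderiv /op /wsum; apply: eq_bigr => k _; apply: eq_bigr => t _.
congr (_ * _); rewrite -(Der_sum x0); rewrite size_tuple.
by apply: eq_bigr => i _; rewrite (tnth_nth x0).
Qed.

Lemma Der_cat D t s :
  Der D (t ++ s) = sadd (smul (Der D t) (word s)) (smul (word t) (Der D s)).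
Proof.
elim: t => [|a t IH] /=.
  change (word [::]) with (@sone L); rewrite smul0r smul1l.
  by apply: sext => w; rewrite /sadd /szero add0r.
change (word (a :: t)) with (smul (sletter a) (word t)).
rewrite IH -smul_word smulDr !smulDl !smulA.
by apply: sext => w; rewrite /sadd addrA.
Qed.

Lemma wsum_id n g u : (size u <= n)%N -> g u = wsum n (fun s => g s * word s u).
Proof.
move=> hu; under eq_wsum => s do rewrite word_coef /= eq_sym.
by rewrite wsum_deltaV // => h; move: hu; rewrite leqNgt h.
Qed.

Lemma sderiv_mul (x0 : L) D f g :
  sderiv D (smul f g) = sadd (smul (sderiv D f) g) (smul f (sderiv D g)).
Proof.
rewrite (sderivE x0); have hV := vanish_Der D.
apply: sext => v; set m := size v; set n := m.+1.
have hm : (size v <= m)%N by [].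
have hmn : (m <= n)%N by apply: leqnSn.
have E1 : op (Der D) (fun v => (size v).+1) (smul f g) v =
    wsum n (fun t => wsum n (fun s => f t * g s * Der D (t ++ s) v)).
  rewrite /op -/m -/n.
  rewrite (wsum_ext (G := fun u => wsum n (fun t => wsum n (fun s =>
      f t * g s * Der D u v * (u == t ++ s)%:R)))); last first.
    move=> u hu; rewrite (smul_expand _ _ hu) wsumMr; apply: eq_wsum => t.
    rewrite wsumMr; apply: eq_wsum => s; ring.
  rewrite wsum_exch; under eq_wsum => t do rewrite wsum_exch.
  apply: eq_wsum => t; apply: eq_wsum => s; rewrite wsum_deltaV // => h.
  by rewrite hV ?mulr0.
have E2 : smul (op (Der D) (fun v => (size v).+1) f) g v =
    wsum n (fun t => wsum n (fun s => f t * g s * smul (Der D t) (word s) v)).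
  rewrite (smul_expand _ _ hm).
  rewrite (wsum_ext (G := fun u => wsum m (fun u' => wsum n (fun t => wsum n (fun s =>
      f t * g s * (Der D t u * word s u' * (v == u ++ u')%:R)))))); last first.
    move=> u hu; apply: wsum_ext => u' hu'.
    rewrite (op_expand (n := n) _ hV); last by rewrite ltnS.
    rewrite (wsum_id g (leq_trans hu' hmn)) !wsumMr.
    apply: eq_wsum => t; rewrite !wsumMl !wsumMr; apply: eq_wsum => s; ring.
  under eq_wsum => u do rewrite wsum_exch.
  under eq_wsum => u do under eq_wsum => t do rewrite wsum_exch.
  rewrite wsum_exch.
  under eq_wsum => t do rewrite wsum_exch.
  apply: eq_wsum => t; apply: eq_wsum => s.
  under eq_wsum => u do rewrite -wsumMl.
  by rewrite -wsumMl -(smul_expand _ _ hm).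
have E3 : smul f (op (Der D) (fun v => (size v).+1) g) v =
    wsum n (fun t => wsum n (fun s => f t * g s * smul (word t) (Der D s) v)).
  rewrite (smul_expand _ _ hm).
  rewrite (wsum_ext (G := fun u => wsum m (fun u' => wsum n (fun t => wsum n (fun s =>
      f t * g s * (word t u * Der D s u' * (v == u ++ u')%:R)))))); last first.
    move=> u hu; apply: wsum_ext => u' hu'.
    rewrite (op_expand (n := n) _ hV); last by rewrite ltnS.
    rewrite (wsum_id f (leq_trans hu hmn)) !wsumMr.
    apply: eq_wsum => t; rewrite !wsumMl !wsumMr; apply: eq_wsum => s; ring.
  under eq_wsum => u do rewrite wsum_exch.
  under eq_wsum => u do under eq_wsum => t do rewrite wsum_exch.
  rewrite wsum_exch.
  under eq_wsum => t do rewrite wsum_exch.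
  apply: eq_wsum => t; apply: eq_wsum => s.
  under eq_wsum => u do rewrite -wsumMl.
  by rewrite -wsumMl -(smul_expand _ _ hm).
rewrite /sadd E1 E2 E3 wsumD; apply: eq_wsum => t; rewrite wsumD; apply: eq_wsum => s.
by rewrite Der_cat /sadd mulrDr.
Qed.

End Der.


Section Comp.
Variables L1 L2 : finType.
Variable phi : L1 -> ser L2.
Hypothesis hphi : forall a, low 1 (phi a).

Lemma ssubst_word t : ssubst phi (word t) = Phi phi t.
Proof. by rewrite ssubst_op op_word //; apply: vanish_Phi. Qed.

Lemma ssubst_letter a : ssubst phi (sletter a) = phi a.
Proof.
rewrite ssubst_op; change (sletter a) with (fun x : seq L1 => ((x == [:: a])%:R : algC)).
by rewrite op_delta; [exact: smul1r | apply: vanish_Phi].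
Qed.

Lemma ssubst_one : ssubst phi (@sone L1) = @sone L2.
Proof.
rewrite ssubst_op; change (@sone L1) with (fun x : seq L1 => ((x == [::])%:R : algC)).
by rewrite op_delta //; apply: vanish_Phi.
Qed.

End Comp.

Section DerW.
Variable L : finType.
Variable x0 : L.
Variable D : L -> ser L.

Lemma sderiv_word t : sderiv D (word t) = Der D t.
Proof. by rewrite (sderivE x0) op_word //; apply: vanish_Der. Qed.

Lemma sderiv_one : sderiv D (@sone L) = @szero L.
Proof. exact: (sderiv_word [::]). Qed.

Lemma sderiv_letter a : sderiv D (sletter a) = D a.
Proof.
rewrite (sderivE x0); change (sletter a) with (fun x : seq L => ((x == [:: a])%:R : algC)).
rewrite op_delta; last exact: vanish_Der.
rewrite /= smulr0; change (word [::]) with (@sone L); rewrite smul1r.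
by apply: sext => w; rewrite /sadd /szero addr0.
Qed.

End DerW.

Lemma comp_deriv (L1 L2 : finType) (x1 : L1) (x2 : L2) (phi : L1 -> ser L2)
  (hphi : forall a, low 1 (phi a)) (D1 : L1 -> ser L1) (D2 : L2 -> ser L2)
  (H : forall a, ssubst phi (D1 a) = sderiv D2 (phi a)) f :
  ssubst phi (sderiv D1 f) = sderiv D2 (ssubst phi f).
Proof.
have Hw : forall t, ssubst phi (Der D1 t) = sderiv D2 (Phi phi t).
  elim=> [|a t IH] /=.
    rewrite ssubst_op op_zero; change (Phi phi [::]) with (@sone L2).
    by rewrite (sderiv_one x2).
  rewrite ssubst_op op_add -!ssubst_op !ssubst_mul // ssubst_word // ssubst_letter // IH H.
  change (Phi phi (a :: t)) with (smul (phi a) (Phi phi t)).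
  by rewrite (sderiv_mul x2).
apply: sext => v; set m := size v; set n := m.+1.
transitivity (wsum n (fun t => f t * ssubst phi (Der D1 t) v)).
  rewrite (sderivE x1) ssubst_op {1}/op -/m.
  rewrite (wsum_ext (G := fun u => wsum n (fun t => f t * Der D1 t u * Phi phi u v))); last first.
    by move=> u hu; rewrite (op_expand (n := n) _ (vanish_Der D1)) ?ltnS // wsumMr.
  rewrite wsum_exch; apply: eq_wsum => t; rewrite /op -/m wsumMl.
  by apply: eq_wsum => u; rewrite mulrA.
transitivity (wsum n (fun t => f t * sderiv D2 (Phi phi t) v)).
  by apply: eq_wsum => t; rewrite Hw.
have R : sderiv D2 (ssubst phi f) v = wsum n (fun t => f t * sderiv D2 (Phi phi t) v).
  rewrite !(sderivE x2) /op -/m -/n.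
  rewrite (wsum_ext (G := fun u => wsum n (fun t => f t * Phi phi t u * Der D2 u v))); last first.
    by move=> u hu; rewrite ssubst_op (op_expand (n := n) _ (vanish_Phi hphi)) // wsumMr.
  rewrite wsum_exch; apply: eq_wsum => t; rewrite wsumMl.
  by apply: eq_wsum => u; rewrite mulrA.
by rewrite R.
Qed.

Lemma ssubst_comp (L1 L2 L3 : finType) (chi : L1 -> ser L2) (phi : L2 -> ser L3)
  (hchi : forall a, low 1 (chi a)) (hphi : forall a, low 1 (phi a)) f :
  ssubst phi (ssubst chi f) = ssubst (fun a => ssubst phi (chi a)) f.
Proof.
have Hw : forall t, ssubst phi (Phi chi t) = Phi (fun a => ssubst phi (chi a)) t.
  elim=> [|a t IH] /=; first exact: (ssubst_one hphi).
  change (Phi chi (a :: t)) with (smul (chi a) (Phi chi t)).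
  by rewrite ssubst_mul // IH.
apply: sext => v; set m := size v.
change (ssubst phi (ssubst chi f) v =
        wsum m (fun t => f t * Phi (fun a => ssubst phi (chi a)) t v)).
under [RHS]eq_wsum => t do rewrite -Hw.
rewrite ssubst_op {1}/op -/m.
rewrite (wsum_ext (G := fun u => wsum m (fun t => f t * Phi chi t u * Phi phi u v))); last first.
  by move=> u hu; rewrite ssubst_op (op_expand (n := m) _ (vanish_Phi hchi)) // wsumMr.
rewrite wsum_exch; apply: eq_wsum => t; rewrite /op -/m wsumMl.
by apply: eq_wsum => u; rewrite mulrA.
Qed.


Lemma unitC_conj (z : algC) : `|z| = 1 -> z^* = z^-1.
Proof.
move=> hz; have: z * z^* = 1 by rewrite -normCK hz expr1n.
move=> h; have z0 : z != 0 by apply: contra_eq_neq h => ->; rewrite mul0r eq_sym oner_eq0.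
by rewrite -[z^*]mul1r -(mulVf z0) -mulrA h mulr1.
Qed.

Lemma norm_sub1 (z : algC) : `|z| = 1 -> `|z - 1| ^+ 2 = 2 - 2 * 'Re z.
Proof.
move=> hz; rewrite normCK rmorphB rmorph1 ReE.
have h: z * z^* = 1 by rewrite -normCK hz expr1n.
have -> : (z - 1) * (z^* - 1) = z * z^* - (z + z^*) + 1 by ring.
by rewrite h; field.
Qed.

Lemma neg1_neq1 : (-1 : algC) != 1.
Proof. by rewrite -subr_eq0 -opprD oppr_eq0 (_ : 1 + 1 = 2%:R) // pnatr_eq0. Qed.

Lemma zeta_prim N : (0 < N)%N -> N.-primitive_root (zetaN N).
Proof.
move=> N_gt0; pose r : algC := N.-root (-1).
have rN : r ^+ N = -1 by rewrite /r rootCK.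
have z1 : zetaN N ^+ N = 1 by rewrite /zetaN -exprM mulnC exprM rN sqrrN expr1n.
have [m pm mdN] := prim_order_exists N_gt0 z1.
case: (eqVneq m N) => [e|mN]; first by move: pm; rewrite e.
exfalso.
have m_gt0 := prim_order_gt0 pm.
set q := (N %/ m)%N.
have Nqm : N = (q * m)%N by rewrite divnK.
have q_gt1 : (1 < q)%N.
  rewrite ltn_neqAle eq_sym lt0n; apply/andP; split.
    by apply: contra_neq mN => h; rewrite Nqm h mul1n.
  by apply/eqP=> h; move: N_gt0; rewrite Nqm h.
have q_gt0 : (0 < q)%N by apply: ltnW.
have rm2 : (r ^+ m) ^+ 2 = 1 by rewrite -exprM mulnC exprM -(prim_expr_order pm).
have rm : r ^+ m = -1.
  move/eqP: rm2; rewrite sqrf_eq1 => /orP[/eqP h|/eqP //].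
  by move: rN; rewrite Nqm mulnC exprM h expr1n => /eqP; rewrite eq_sym (negbTE neg1_neq1).
have nrm1 : forall z : algC, z ^+ N = -1 -> `|z| = 1.
  move=> z hz; apply/eqP; rewrite -(pexpr_eq1 N_gt0) ?normr_ge0 //.
  by rewrite -normrX hz normrN1.
set c := 'Re r.
have r1 : r != 1 by apply: contra_eq_neq rN => ->; rewrite expr1n eq_sym neg1_neq1.
have c_lt1 : 0 < 1 - c.
  have h := norm_sub1 (nrm1 _ rN).
  have : 0 < `|r - 1| ^+ 2 by rewrite exprn_gt0 // normr_gt0 subr_eq0.
  rewrite h (_ : 2 - 2 * c = 2 * (1 - c)); last by ring.
  by rewrite pmulr_rgt0 // ltr0n.
pose z0 := q.-root r.
have z0q : z0 ^+ q = r by rewrite /z0 rootCK.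
have [w pw] := C_prim_root_exists q_gt0.
have wq : w ^+ q = 1 := prim_expr_order pw.
pose z (k : nat) := z0 * w ^+ k.
have zq k : z k ^+ q = r by rewrite /z exprMn z0q -exprM mulnC exprM wq expr1n mulr1.
have zN k : z k ^+ N = -1 by rewrite Nqm exprM zq.
have zn k : `|z k| = 1 := nrm1 _ (zN k).
have Rez k : 'Re (z k) <= c.
  have := real_leVge (Creal_Im (z k)) (rpred0 _); case/orP => h.
    rewrite -Re_conj; apply: rootC_Re_max => //.
      by rewrite -rmorphXn zN rmorphN1.
    by rewrite Im_conj oppr_ge0.
  exact: rootC_Re_max.
pose S (x : algC) := \sum_(j < q) x ^+ j.
have SK k : `|S (z k)| ^+ 2 * `|z k - 1| ^+ 2 = `|r - 1| ^+ 2.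
  by rewrite -exprMn -normrM mulrC -subrX1 zq.
have wn : `|w| = 1.
  by apply/eqP; rewrite -(pexpr_eq1 q_gt0) ?normr_ge0 // -normrX wq normr1.
have z0n : `|z0| = 1.
  by apply/eqP; rewrite -(pexpr_eq1 q_gt0) ?normr_ge0 // -normrX z0q (nrm1 _ rN).
have ww : w * w^* = 1 by rewrite -normCK wn expr1n.
have zz : z0 * z0^* = 1 by rewrite -normCK z0n expr1n.
have geo (x : algC) : x ^+ q = 1 -> x != 1 -> \sum_(k < q) x ^+ k = 0.
  move=> h1 h2; have : (x - 1) * \sum_(k < q) x ^+ k = 0 by rewrite -subrX1 h1 subrr.
  by move/eqP; rewrite mulf_eq0 subr_eq0 (negbTE h2) /= => /eqP.
have sumK : \sum_(k < q) `|S (z k)| ^+ 2 = (q * q)%:R.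
  have e k : `|S (z k)| ^+ 2 = \sum_(j < q) \sum_(l < q)
      (z0 ^+ j * z0^* ^+ l) * (w ^+ j * w^* ^+ l) ^+ k.
    rewrite normCK /S rmorph_sum mulr_suml; apply: eq_bigr => j _.
    rewrite mulr_sumr; apply: eq_bigr => l _.
    rewrite rmorphXn /z rmorphM rmorphXn !exprMn -!exprM [(k * j)%N]mulnC [(k * l)%N]mulnC.
    ring.
  rewrite (eq_bigr _ (fun (k : 'I_q) _ => e k)) exchange_big /=.
  under eq_bigr => j _ do rewrite exchange_big /=.
  under eq_bigr => j _ do under eq_bigr => l _ do rewrite -mulr_sumr.
  rewrite (eq_bigr (fun _ => q%:R)); last first.
    move=> j _; rewrite (bigD1 j) //= [X in _ + X]big1 ?addr0.
      rewrite -!exprMn ww zz !expr1n mul1r.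
      by rewrite (eq_bigr (fun _ => 1)) ?sumr_const ?card_ord // => k _; rewrite expr1n.
    move=> l hl; rewrite geo ?mulr0 //.
      by rewrite exprMn -!exprM !(mulnC _ q) !exprM wq -rmorphXn wq rmorph1 !expr1n mulr1.
    apply/eqP => h.
    have : w ^+ j = w ^+ l.
      have e2 : w ^+ l * (w ^+ j * w^* ^+ l) = w ^+ j.
        by rewrite mulrCA -exprMn ww expr1n mulr1.
      by rewrite -e2 h mulr1.
    move/eqP; rewrite (eq_prim_root_expr pw) !modn_small // => /eqP/val_inj hjl.
    by move: hl; rewrite hjl eqxx.
  by rewrite sumr_const card_ord natrM mulr_natr.
pose T := \sum_(k < q) `|S (z k)| ^+ 2 * (c - 'Re (z k)).
have T_ge0 : 0 <= T.
  by apply: sumr_ge0 => k _; rewrite mulr_ge0 ?exprn_ge0 ?normr_ge0 ?subr_ge0.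
have TE : T = - (q%:R * (q%:R - 1) * (1 - c)).
  have e k : `|S (z k)| ^+ 2 * (c - 'Re (z k)) =
      (c - 1) * `|S (z k)| ^+ 2 + `|r - 1| ^+ 2 / 2.
    by rewrite -(SK k) norm_sub1 //; field.
  rewrite /T (eq_bigr _ (fun (k : 'I_q) _ => e k)) big_split /= -mulr_sumr sumK sumr_const card_ord.
  rewrite norm_sub1 ?(nrm1 _ rN) // -/c natrM.
  by rewrite -mulr_natr; field.
have hp : 0 < q%:R * (q%:R - 1) * (1 - c).
  by rewrite mulr_gt0 // mulr_gt0 ?ltr0n // subr_gt0 ltr1n.
move: T_ge0; rewrite TE oppr_ge0 => h.
by move: (lt_le_trans hp h); rewrite ltxx.
Qed.


Lemma op_scale' (L1 L2 : finType) (K : seq L1 -> ser L2) B (c : algC) (f : ser L1) v :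
  op K B (fun w => c * f w) v = c * op K B f v.
Proof. by rewrite /op wsumMl; apply: eq_wsum => t; rewrite mulrA. Qed.

Lemma smulZl (L : finType) c (f g : ser L) : smul (sscale c f) g = sscale c (smul f g).
Proof. by apply: sext => w; rewrite /smul /sscale mulr_sumr; apply: eq_bigr => i _; rewrite mulrA. Qed.

Lemma smulZr (L : finType) c (f g : ser L) : smul f (sscale c g) = sscale c (smul f g).
Proof. by apply: sext => w; rewrite /smul /sscale mulr_sumr; apply: eq_bigr => i _; rewrite mulrCA. Qed.

Lemma ssubst_scomm (L1 L2 : finType) (phi : L1 -> ser L2) (hphi : forall a, low 1 (phi a)) f g :
  ssubst phi (scomm f g) = scomm (ssubst phi f) (ssubst phi g).
Proof. by rewrite /scomm ssubst_op op_add op_opp -!ssubst_op !ssubst_mul. Qed.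

Lemma scommZl (L : finType) c (f g : ser L) : scomm (sscale c f) g = sscale c (scomm f g).
Proof.
rewrite /scomm smulZl smulZr; apply: sext => w; rewrite /sadd /sopp /sscale; ring.
Qed.

Lemma sum_shift1 (G : nat -> algC) N : (0 < N)%N -> (forall j, G (j + N)%N = G j) ->
  \sum_(1 <= j < N.+1) G j.+1 = \sum_(1 <= j < N.+1) G j.
Proof.
move=> hN hG.
have e := big_add1 0 +%R 1 N.+2 xpredT G; simpl in e; rewrite -e.
rewrite big_nat_recr //= (@big_ltn _ _ _ 1 N.+1) ?ltnS //.
by rewrite -[N.+1]add1n hG addrC.
Qed.

Lemma sum_shift (G : nat -> algC) N m : (0 < N)%N -> (forall j, G (j + N)%N = G j) ->
  \sum_(1 <= j < N.+1) G (m + j)%N = \sum_(1 <= j < N.+1) G j.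
Proof.
move=> hN hG; elim: m => [|m IH]; first by [].
rewrite -IH -(sum_shift1 (G := fun j => G (m + j)%N)) //; last by move=> j; rewrite addnA hG.
by apply: eq_bigr => j _; rewrite addSnnS.
Qed.

Section Spec.
Variable N : nat.
Hypothesis hN : (0 < N)%N.

Local Notation zeta := (zetaN N).
Definition om (m : nat) : 'I_N := Ordinal (ltn_pmod m hN).

Lemma xz_eq m : xz N m = Some (om m).
Proof.
rewrite /xz; case: insubP => [u _ hu|]; last by rewrite ltn_pmod.
by congr Some; apply: val_inj.
Qed.

Lemma zN1 : zeta ^+ N = 1.
Proof. exact: prim_expr_order (zeta_prim hN). Qed.

Lemma zeta_neq0 : zeta != 0.
Proof.
apply/eqP => h; move: zN1; rewrite h expr0n; case: N hN => // n _ /eqP.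
by rewrite eq_sym oner_eq0.
Qed.

Definition ttL (a : nat) (b : alphXt N) : ser (alphXt N) :=
  match b with
  | None => sletter (None : alphXt N)
  | Some alpha => sscale (zeta ^+ (a * iota_inv alpha)%N) (sletter (Some alpha))
  end.
Definition tzL (k : 'I_N) (b : alphX N) : ser (alphX N) :=
  match b with
  | None => sletter (None : alphX N)
  | Some j => sletter (xz N (val k + val j)%N)
  end.

Lemma tt_aE a : @tt_a N a = ssubst (ttL a). Proof. by []. Qed.
Lemma t_zetaE k : @t_zeta N k = ssubst (tzL k). Proof. by []. Qed.
Lemma calFE : @calF N = ssubst (@calF_letter N). Proof. by []. Qed.

Lemma low_calF b : low 1 (@calF_letter N b).
Proof.
case: b => [al|]; last exact: low_letter.
by move=> w hw /=; rewrite big1 // => m _; rewrite low_letter ?mulr0.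
Qed.
Lemma low_tt a b : low 1 (ttL a b).
Proof.
case: b => [al|] /=; last exact: low_letter.
by move=> w hw; rewrite /sscale low_letter ?mulr0.
Qed.
Lemma low_tz k b : low 1 (tzL k b).
Proof. by case: b => [j|] /=; exact: low_letter. Qed.

Lemma calF_tt a f : calF (tt_a a f) = t_zeta (om a) (calF f).
Proof.
rewrite calFE tt_aE t_zetaE (ssubst_comp (@low_tt a) low_calF).
rewrite (ssubst_comp low_calF (@low_tz (om a))).
congr (ssubst _ f); apply: functional_extensionality => b.
case: b => [al|] /=; last by rewrite (ssubst_letter low_calF) (ssubst_letter (@low_tz (om a))).
rewrite ssubst_op op_scale -ssubst_op (ssubst_letter low_calF).
apply: sext => v; rewrite /sscale /= ssubst_op op_sum.
under [RHS]eq_bigr => m _ do rewrite op_scale' -ssubst_op xz_eq (ssubst_letter (@low_tz (om a))) /=.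
set A := iota_inv al.
pose G j := zeta ^- (j * A) * sletter (xz N j) v.
have hG j : G (j + N)%N = G j.
  by rewrite /G /xz modnDr mulnDl exprD [zeta ^+ (N * A)]exprM zN1 expr1n mulr1.
have e m : zeta ^- (m * A) * sletter (xz N (a %% N + m %% N)) v = zeta ^+ (a * A) * G (a + m)%N.
  rewrite /G /xz modnDm mulnDl exprD.
  by field; apply/andP; split; apply: expf_neq0; exact: zeta_neq0.
rewrite (eq_bigr _ (fun m _ => e m)) -mulr_sumr (sum_shift (G := G)) //.
Qed.


Lemma beta_e' (z : algC) j (be : 'I_N) : z ^+ N = 1 ->
  z ^- (j * iota_inv be) = ((z ^+ j)^-1) ^+ be.
Proof.
move=> zN; rewrite exprVn -exprM /iota_inv; case: ifP => [/eqP b0|_] //.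
by rewrite b0 muln0 expr0 mulnC exprM zN expr1n.
Qed.

Lemma beta_e j (be : 'I_N) : zeta ^- (j * iota_inv be) = ((zeta ^+ j)^-1) ^+ be.
Proof. exact: (beta_e' j be zN1). Qed.

Lemma sum_beta_N : \sum_(be : 'I_N) zeta ^- (N * iota_inv be) = N%:R.
Proof.
rewrite (eq_bigr _ (fun be _ => beta_e N be)) zN1 invr1.
rewrite (eq_bigr (fun _ => 1)) => [|be _]; last by rewrite expr1n.
by rewrite sumr_const card_ord.
Qed.

Lemma sum_beta_lt j : (0 < j < N)%N -> \sum_(be : 'I_N) zeta ^- (j * iota_inv be) = 0.
Proof.
move=> /andP[j0 jN].
rewrite (eq_bigr _ (fun be _ => beta_e j be)).
set y := (zeta ^+ j)^-1.
have yN : y ^+ N = 1.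
  move: zN1; rewrite /y; move: (zetaN N) => z zN.
  by rewrite exprVn -exprM mulnC exprM zN expr1n invr1.
have y1 : y != 1.
  rewrite /y invr_eq1 -(expr0 zeta) (eq_prim_root_expr (zeta_prim hN)) mod0n modn_small //.
  by rewrite -lt0n.
have : (y - 1) * \sum_(i < N) y ^+ i = 0 by rewrite -subrX1 yN subrr.
by move/eqP; rewrite mulf_eq0 subr_eq0 (negbTE y1) /= => /eqP.
Qed.

Lemma calF_sumX :
  calF (ssum (fun be : 'I_N => sletter (Some be : alphXt N))) = sscale N%:R (sletter (xz N N)).
Proof.
rewrite calFE /ssum ssubst_op op_sum; apply: sext => v.
under eq_bigr => be _ do rewrite -ssubst_op (ssubst_letter low_calF) /=.
rewrite exchange_big /=.
under eq_bigr => j _ do rewrite -mulr_suml.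
rewrite big_nat_recr //= sum_beta_N big_nat big1 ?add0r //.
by move=> j /andP[j1 jN]; rewrite sum_beta_lt ?mul0r // j1.
Qed.

Definition dtL (psit : ser (alphXt N)) (b : alphXt N) : ser (alphXt N) :=
  match b with
  | None => @szero (alphXt N)
  | Some alpha => Tt_a (iota_inv alpha)
      (scomm (ssum (fun beta : 'I_N => sletter (Some beta : alphXt N))) psit)
  end.
Definition dL (psi : ser (alphX N)) (a : alphX N) : ser (alphX N) :=
  match a with
  | None => @szero (alphX N)
  | Some k => scomm (sletter (Some k)) (t_zeta k psi)
  end.

Lemma letterH psit b :
  ssubst (@calF_letter N) (dtL psit b) = sderiv (dL (calF psit)) (@calF_letter N b).
Proof.
case: b => [al|] /=; last by rewrite ssubst_op op_zero (sderiv_letter None).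
set C := scomm _ psit.
have tzC m : t_zeta (om m) (calF C) =
    sscale N%:R (scomm (sletter (Some (om m))) (t_zeta (om m) (calF psit))).
  rewrite /C {1}calFE (ssubst_scomm low_calF) -calFE calF_sumX scommZl.
  rewrite t_zetaE ssubst_op op_scale -ssubst_op (ssubst_scomm (@low_tz (om m))).
  rewrite (ssubst_letter (@low_tz (om m))) xz_eq /=.
  have -> : xz N (m %% N + N %% N) = Some (om m).
    by rewrite xz_eq; congr Some; apply: val_inj; rewrite /= modnDm modnDr.
  done.
apply: sext => v.
rewrite /Tt_a ssubst_op op_scale' op_sum.
under eq_bigr => m _ do rewrite op_scale' -ssubst_op -calFE calF_tt tzC.
rewrite (sderivE None) op_sum.
under [RHS]eq_bigr => m _ do rewrite op_scale' -(sderivE None) (sderiv_letter None) xz_eq /=.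
rewrite mulr_sumr; apply: eq_bigr => m _; rewrite /sscale.
by field; rewrite expf_neq0 ?zeta_neq0 //= pnatr_eq0 -lt0n hN.
Qed.

End Spec.

Unset Implicit Arguments.
Theorem proposition3p9 (N : nat) (hN : (3 <= N)%N)
  (psit : ser (alphXt N)) (hpsit : forall w, psit w \in Crat) :
  forall f : ser (alphXt N), (forall w, @inQmuN N (f w)) ->
    @calF N (@dt_psi N psit f) = @d_psi N (@calF N psit) (@calF N f).
Proof.
have hN0 : (0 < N)%N by apply: leq_trans hN.
move=> f _.
have h := comp_deriv (None : alphXt N) (None : alphX N) (@low_calF N) (letterH hN0 psit) f.
exact h.
Qed.
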